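(* Let $a,M$ be positive integers and $\lambda=\lambda_1/\lambda_2$ with $\lambda_1,\lambda_2$ coprime integers, $\lambda_2\ge1$. Let $L_{\min}=\lambda_2\,\mathrm{lcm}(a,M)$ and $c=\gcd(a,M)=\prod_{j=1}^Jp_j^{\gamma_j}$ (prime factorization). Let $c_1=\prod_{j=1}^Jp_j^{\sigma_j}$, where $\sigma_j=\gamma_j$ if $\gcd(\lambda_2,p_j)=1$ and $\sigma_j=0$ otherwise (i.e. $c_1$ is the largest divisor of $c$ coprime to $\lambda_2$). If $L=n\,L_{\min}\,\frac{c}{c_1}$ for some $n\in\mathbb{N}$, then, with $b=L/M$, $s=\lambda b$ and $\Lambda\le\mathbb{Z}_L^2$ the subgroup generated by $(a,s)^T$ and $(0,b)^T$, the frequency shear can be chosen to be $0$; that is, there exists $s_1\in\mathbb{Z}_L$ such that $\begin{pmatrix}1&0\\ -s_1&1\end{pmatrix}\Lambda=D\mathbb{Z}_L^2$ for some diagonal matrix $D\in\mathbb{Z}_L^{2\times2}$ (equivalently, $\Lambda=U_{0,s_1}\tilde\Lambda$ for a separable lattice $\tilde\Lambda$, where $U_{s_0,s_1}=\begin{pmatrix}1&-s_0\\-s_1&s_0s_1+1\end{pmatrix}$).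
   Context: All arithmetic in $\mathbb{Z}_L=\mathbb{Z}/L\mathbb{Z}$; $A\mathbb{Z}_L^2=\{Az\bmod L:z\in\mathbb{Z}_L^2\}$ and a lattice is separable if it equals $D\mathbb{Z}_L^2$ for a diagonal $D$. In the paper's terminology, every lattice can be written as $U_{s_0,s_1}D\mathbb{Z}_L^2$ with $U_{s_0,s_1}=S_{-s_1}F^{-1}S_{s_0}F$ ($F=\begin{pmatrix}0&-1\\1&0\end{pmatrix}$, $S_c=\begin{pmatrix}1&0\\c&1\end{pmatrix}$); $s_0$ is the frequency shear and $s_1$ the time shear, and ''the frequency shear can be chosen to be 0'' means such a representation exists with $s_0=0$. Note $L$ of the given form is a multiple of $L_{\min}$, so $a\mid L$, $M\mid L$, and $\frac{L}{a}\lambda,\frac{L}{M}\lambda\in\mathbb{Z}$. *)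

(* Defs.v *)
From mathcomp Require Import all_boot all_order all_algebra.
Set Implicit Arguments. Unset Strict Implicit. Unset Printing Implicit Defensive.
Import GRing.Theory Num.Theory.
Local Open Scope ring_scope.

(* Elements of Z_L^2 are represented by integer column vectors, compared mod L. *)
Definition eqmodv (L : int) (u v : 'cV[int]_2) : Prop :=
  forall i : 'I_2, ((u i ord0) = (v i ord0) %[mod L])%Z.

Definition mx2 (p q r t : int) : 'M[int]_2 :=
  \matrix_(i < 2, j < 2)
    if i == 0 :> 'I_2 then (if j == 0 :> 'I_2 then p else q)
    else (if j == 0 :> 'I_2 then r else t).
Definition v2 (x y : int) : 'cV[int]_2 :=
  \col_(i < 2) if i == 0 :> 'I_2 then x else y.

Definition gen_lattice (L : int) (g1 g2 : 'cV[int]_2) : 'cV[int]_2 -> Prop :=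
  fun z => exists k m : int, eqmodv L z (k *: g1 + m *: g2).

Definition mx_image (L : int) (A : 'M[int]_2) (Lam : 'cV[int]_2 -> Prop)
  : 'cV[int]_2 -> Prop :=
  fun z => exists w, Lam w /\ eqmodv L z (A *m w).

Definition mx_range (L : int) (A : 'M[int]_2) : 'cV[int]_2 -> Prop :=
  fun z => exists w, eqmodv L z (A *m w).

Definition c1_of (c l2 : nat) : nat :=
  (\prod_(p <- primes c | coprime l2 p) p ^ logn p c)%N.

(* Main.v *)
Require Import Defs.
From mathcomp Require Import all_boot all_order all_algebra.
From mathcomp Require Import zify ring.
Import GRing.Theory Num.Theory.
Lemma c1_cop c l2 : coprime (c1_of c l2) l2.
Proof.
rewrite /c1_of; apply: (big_ind (fun x => coprime x l2)) => //.
- by rewrite /coprime gcd1n.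
- by move=> x y hx hy; rewrite coprimeMl hx hy.
- by move=> p hp; apply: coprimeXl; rewrite coprime_sym.
Qed.

Lemma c1_dvd c l2 : (0 < c)%N -> (c1_of c l2 %| c)%N.
Proof.
move=> c0; rewrite {2}(prod_prime_decomp c0) prime_decompE big_map /=.
rewrite (bigID (fun p => coprime l2 p)) /=; exact: dvdn_mulr.
Qed.

Lemma key (a M l2 n : nat) : (0 < a)%N -> (0 < M)%N -> (1 <= l2)%N -> 
  let c := gcdn a M in let c1 := c1_of c l2 in
  let L := (n * (l2 * lcmn a M) * (c %/ c1))%N in
  let b := (L %/ M)%N in
  [/\ b = (l2 * (b %/ l2))%N & (gcdn a b %| b %/ l2)%N].
Proof.
move=> a0 M0 l1 c c1 L b.
have c0 : (0 < c)%N by rewrite gcdn_gt0 a0.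
have dc : (c1 %| c)%N by exact: c1_dvd.
have c10 : (0 < c1)%N by apply: dvdn_gt0 c0 dc.
set q := (c %/ c1)%N. have cq : c = (q * c1)%N by rewrite divnK.
set a' := (a %/ c)%N. have ac : a = (a' * c)%N by rewrite divnK // dvdn_gcdl.
have hl : lcmn a M = (a' * M)%N.
  apply/eqP; rewrite -(eqn_pmul2r c0) muln_lcm_gcd -/c; apply/eqP.
  rewrite {1}ac; ring.
set t := (n * a' * q)%N.
have hb : b = (l2 * t)%N.
  rewrite /b /L hl. have -> : (n * (l2 * (a' * M)) * q = (l2 * t) * M)%N by rewrite /t; ring.
  by rewrite mulnK.
have ht : (b %/ l2 = t)%N by rewrite hb mulKn.
rewrite ht; split => //.
have h1 : (gcdn a b %| c1 * t)%N.
  apply: dvdn_trans (dvdn_gcdl _ _) _. apply/dvdnP; exists (n)%N.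
  rewrite /t ac cq; ring.
have h2 : (gcdn a b %| l2 * t)%N by rewrite -hb dvdn_gcdr.
have := dvdn_gcd (gcdn a b) (c1 * t) (l2 * t); rewrite h1 h2 -muln_gcdl.
by move: (c1_cop c l2); rewrite /coprime => /eqP ->; rewrite mul1n.
Qed.
Local Open Scope ring_scope.

Lemma v2_eta (v : 'cV[int]_2) : v = v2 (v 0 0) (v 1 0).
Proof. apply/matrixP => i j; rewrite !mxE (ord1 j); case: i => [[|[|i]] hi] //=; by congr (v _ _); exact: val_inj. Qed.

Lemma mul_mx2_v2 p q r t x y :
  mx2 p q r t *m v2 x y = v2 (p * x + q * y) (r * x + t * y).
Proof.
apply/matrixP => i j; rewrite !mxE !big_ord_recr big_ord0 /= !mxE add0r.
case: i => [[|[|i]] hi] //=.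
Qed.

Lemma lin_v2 (k m x y x' y' : int) :
  k *: v2 x y + m *: v2 x' y' = v2 (k * x + m * x') (k * y + m * y').
Proof. by apply/matrixP => i j; rewrite !mxE; case: (i == 0). Qed.

Lemma cong (L x y : int) : (x = y %[mod L])%Z <-> exists q, x = y + q * L.
Proof.
split.
- move/eqP; rewrite eqz_mod_dvd => /dvdzP [q hq]; exists q; rewrite -hq; ring.
- move=> [q ->]; apply/eqP; rewrite eqz_mod_dvd; apply/dvdzP; exists q; ring.
Qed.

Lemma eqmodv_v2 L x y x' y' : eqmodv L (v2 x y) (v2 x' y') <->
  (exists q, x = x' + q * L) /\ (exists q, y = y' + q * L).
Proof.
rewrite /eqmodv; split.
- move=> h; split; apply/cong; [move: (h 0) | move: (h 1)]; by rewrite !mxE.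
- move=> [/cong h1 /cong h2] i; case: i => [[|[|]]] // ?; rewrite !mxE //=.
Qed.

Lemma diag2 a b : is_diag_mx (mx2 a 0 0 b).
Proof. apply/is_diag_mxP => i j; rewrite !mxE; case: i => [[|[|]]] //; case: j => [[|[|]]] //. Qed.

Lemma main_int (L a b s s1 w : int) : s - s1 * a = w * b ->
  forall z, mx_image L (mx2 1 0 (- s1) 1) (gen_lattice L (v2 a s) (v2 0 b)) z
     <-> mx_range L (mx2 a 0 0 b) z.
Proof.
move=> hw z; rewrite (v2_eta z); set z0 := z 0 0; set z1 := z 1 0; split.
- move=> [v [[k [m]]]]; rewrite (v2_eta v) lin_v2 mul_mx2_v2 !eqmodv_v2.
  move=> [[q1 e1] [q2 e2]] [[q3 e3] [q4 e4]].
  exists (v2 k (k * w + m)); rewrite mul_mx2_v2 eqmodv_v2; split.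
  + exists (q3 + q1); rewrite e3 e1; ring.
  + exists (q4 - s1 * q1 + q2); rewrite e4 e1 e2.
    have -> : s = w * b + s1 * a by rewrite -hw; ring.
    ring.
- move=> [v]; rewrite (v2_eta v) mul_mx2_v2 eqmodv_v2; set x := v 0 0; set y := v 1 0.
  move=> [[q1 e1] [q2 e2]].
  exists (v2 (x * a) (x * s + (y - x * w) * b)); split.
  + exists x, (y - x * w); rewrite lin_v2 eqmodv_v2; split; exists 0; ring.
  + rewrite mul_mx2_v2 eqmodv_v2; split.
    * exists q1; rewrite e1; ring.
    * exists q2; rewrite e2.
      have -> : s = w * b + s1 * a by rewrite -hw; ring.
      ring.
Qed.

Theorem proposition3p8 (a M : nat) (l1 : int) (l2 : nat) (n : nat) :
  (0 < a)%N -> (0 < M)%N -> (1 <= l2)%N -> coprimez l1 (l2%:Z) -> (0 < n)%N ->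
  let Lmin := (l2 * lcmn a M)%N in
  let c := gcdn a M in
  let c1 := c1_of c l2 in
  let L := (n * Lmin * (c %/ c1))%N in
  let b := (L %/ M)%N in
  (* s = lambda * b = l1 * (b / l2), an integer since l2 | b *)
  let s := l1 * (b %/ l2)%N%:Z in
  let Lam := gen_lattice L%:Z (v2 a%:Z s) (v2 0 b%:Z) in
  exists s1 : int, exists D : 'M[int]_2, is_diag_mx D /\
    forall z : 'cV[int]_2,
      mx_image L%:Z (mx2 1 0 (- s1) 1) Lam z <-> mx_range L%:Z D z.
Proof.
move=> a0 M0 l21 _ _ Lmin c c1 L b s Lam.
have [hb hg] := @key a M l2 n a0 M0 l21.
rewrite -/c -/c1 -/L -/b in hb hg.
move: hg => /dvdnP [r hr].
have [u [v huv]] := Bezoutz a%:Z b%:Z.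
exists (u * l1 * r%:Z), (mx2 a%:Z 0 0 b%:Z); split; first exact: diag2.
apply: main_int (l1 * r%:Z * v) _.
have hg : gcdz a%:Z b%:Z = (gcdn a b)%:Z by [].
rewrite /s hr PoszM -hg -huv; ring.
Qed.
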